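(* Let $1\to A\to B\xrightarrow{f}C\to 1$ be an exact sequence of definable group homomorphisms between groups definable in $(Z,R)^{eq}$, and assume that $A$ and $C$ are $R$-internal. Then $B$ is $R$-internal.
   Context: Let $\mathfrak C$ be a monster model, $Z,R$ definable subsets of $\mathfrak C$ which are stably embedded (subsets of $Z^n$, resp. $R^n$, definable with parameters from $\mathfrak C$ are definable with parameters from $Z$, resp. $R$) and fully orthogonal (for all $m,n$, every definable subset of $Z^m\times R^n$ is a finite union of sets $U\times V$ with $U\subseteq Z^m$, $V\subseteq R^n$ definable). $(Z,R)^{eq}$ is the two-sorted structure $(Z,R)$ (no connection between the sorts) expanded by all imaginary sorts; ''definable'' means definable in $(Z,R)^{eq}$ with parameters. A definable set $X$ is $R$-internal if there is a definable surjection from $R^k$ onto $X$ for some $k$. *)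

(* Defs.v *)
From Stdlib Require List.
From mathcomp Require Import all_boot.
Set Implicit Arguments. Unset Strict Implicit. Unset Printing Implicit Defensive.

Record language := Language { sym : Type; arity : sym -> nat }.

Record structure (L : language) := Structure {
  carrier :> Type;
  interp : forall s : sym L, ('I_(arity s) -> carrier) -> Prop }.

Inductive formula (L : language) : Type :=
| FRel (s : sym L) (args : 'I_(arity s) -> nat)
| FEq (i j : nat)
| FNot (f : formula L)
| FAnd (f g : formula L)
| FEx (i : nat) (f : formula L).

Definition upd {M : Type} (v : nat -> M) (i : nat) (a : M) : nat -> M :=
  fun j => if j == i then a else v j.

Fixpoint sat (L : language) (C : structure L) (v : nat -> C) (f : formula L)
  : Prop :=
  match f with
  | FRel s args => @interp L C s (fun x => v (args x))
  | FEq i j => v i = v j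
  | FNot g => ~ @sat L C v g
  | FAnd g h => @sat L C v g /\ @sat L C v h
  | FEx i g => exists a : C, @sat L C (upd v i a) g
  end.
Arguments sat {L} C v f.

Definition tcat {M : Type} (k l : nat) (a : 'I_k -> M) (b : 'I_l -> M)
  : 'I_(k + l) -> M :=
  fun i => match split i with inl i1 => a i1 | inr i2 => b i2 end.
Definition tleft {M : Type} (k l : nat) (t : 'I_(k + l) -> M) : 'I_k -> M :=
  fun i => t (lshift l i).
Definition tright {M : Type} (k l : nat) (t : 'I_(k + l) -> M) : 'I_l -> M :=
  fun j => t (rshift k j).

Definition asg {M : Type} (k : nat) (a : 'I_k -> M) (q : nat -> M) : nat -> M :=
  fun j => match (insub j : option 'I_k) with Some i => a i | None => q j end.

Definition definable_over (L : language) (C : structure L) (P : C -> Prop)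
  (k : nat) (A : ('I_k -> C) -> Prop) : Prop :=
  exists (l : nat) (b : 'I_l -> C) (phi : formula L),
    (forall i, P (b i)) /\
    forall (a : 'I_k -> C) (q : nat -> C),
      A a <-> sat C (asg (tcat a b) q) phi.

Definition definable (L : language) (C : structure L) (k : nat)
  (A : ('I_k -> C) -> Prop) : Prop :=
  definable_over (fun _ => True) A.

Definition definable1 (L : language) (C : structure L) (Z : C -> Prop) : Prop :=
  definable (fun t : 'I_1 -> C => Z (t ord0)).

Definition card_lt (I J : Type) : Prop :=
  (exists f : I -> J, injective f) /\ ~ (exists g : J -> I, injective g).

(* every finitely satisfiable family of fewer than |C| formulas in the free
   variable 0 (with parameters) is realized *)
Definition saturated (L : language) (C : structure L) : Prop :=
  forall (I : Type) (phi : I -> formula L) (p : I -> nat -> C),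
    card_lt I C ->
    (forall l : list I, exists a : C,
        forall i, List.In i l -> sat C (upd (p i) 0 a) (phi i)) ->
    exists a : C, forall i, sat C (upd (p i) 0 a) (phi i).

Definition monster (L : language) (C : structure L) : Prop :=
  saturated C /\ card_lt (sym L) C.

Definition stably_embedded (L : language) (C : structure L) (Z : C -> Prop)
  : Prop :=
  forall (n : nat) (A : ('I_n -> C) -> Prop),
    definable A -> (forall t, A t -> forall i, Z (t i)) ->
    definable_over Z A.

Definition fully_orthogonal (L : language) (C : structure L) (Z R : C -> Prop)
  : Prop :=
  forall (m n : nat) (D : ('I_(m + n) -> C) -> Prop),
    definable D ->
    (forall t, D t -> (forall i, Z (tleft t i)) /\ (forall j, R (tright t j))) ->
    exists s : list ((('I_m -> C) -> Prop) * (('I_n -> C) -> Prop)),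
      (forall p, List.In p s ->
         [/\ definable p.1, definable p.2,
             (forall x, p.1 x -> forall i, Z (x i)) &
             (forall y, p.2 y -> forall j, R (y j))]) /\
      (forall t, D t <-> exists p, List.In p s /\ p.1 (tleft t) /\ p.2 (tright t)).

(* A sort of (Z,R): a finite product of copies of Z (colour true) and R
   (colour false). *)
Definition sortset {M : Type} (Z R : M -> Prop) (k : nat) (col : 'I_k -> bool)
  (t : 'I_k -> M) : Prop :=
  forall i, if col i then Z (t i) else R (t i).

(* A set in (Z,R)^eq is presented as dom / ker, where dom is a definable
   subset of a sort of (Z,R) and ker (the fibres of proj) is a definable
   equivalence relation on it; the carrier is the quotient (given abstractly,
   via the surjection proj). *)
Record eq_group (M : Type) := EqGroup {
  eg_k : nat;
  eg_col : 'I_eg_k -> bool;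
  eg_dom : ('I_eg_k -> M) -> Prop;
  eg_car : Type;
  eg_proj : ('I_eg_k -> M) -> eg_car;
  eg_mul : eg_car -> eg_car -> eg_car;
  eg_one : eg_car;
  eg_inv : eg_car -> eg_car }.

Definition def_group (L : language) (C : structure L) (Z R : C -> Prop)
  (G : eq_group C) : Prop :=
  let k := eg_k G in
  let dom := @eg_dom C G in
  let pr := @eg_proj C G in
  let mul := @eg_mul C G in
  (forall t, dom t -> sortset Z R (@eg_col C G) t) /\
  definable dom /\
  (forall g, exists t, dom t /\ pr t = g) /\
  definable (fun t : 'I_(k + k) -> C =>
     [/\ dom (tleft t), dom (tright t) & pr (tleft t) = pr (tright t)]) /\
  definable (fun t : 'I_((k + k) + k) -> C =>
     [/\ dom (tleft (tleft t)), dom (tright (tleft t)), dom (tright t) &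
         pr (tright t) = mul (pr (tleft (tleft t))) (pr (tright (tleft t)))]) /\
  (forall x y z, mul x (mul y z) = mul (mul x y) z) /\
  (forall x, mul (@eg_one C G) x = x) /\
  (forall x, mul (@eg_inv C G x) x = @eg_one C G).

Definition def_map (L : language) (C : structure L) (G H : eq_group C)
  (f : eg_car G -> eg_car H) : Prop :=
  definable (fun t : 'I_(eg_k G + eg_k H) -> C =>
    [/\ eg_dom (tleft t), eg_dom (tright t) &
        f (eg_proj (tleft t)) = eg_proj (tright t)]).

Definition def_hom (L : language) (C : structure L) (G H : eq_group C)
  (f : eg_car G -> eg_car H) : Prop :=
  def_map f /\ forall x y, f (eg_mul x y) = eg_mul (f x) (f y).

Definition R_internal (L : language) (C : structure L) (R : C -> Prop)
  (G : eq_group C) : Prop :=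
  exists (n : nat) (h : ('I_n -> C) -> eg_car G),
    (forall g, exists r, (forall j, R (r j)) /\ h r = g) /\
    definable (fun t : 'I_(n + eg_k G) -> C =>
      [/\ (forall j, R (tleft t j)), eg_dom (tright t) &
          h (tleft t) = eg_proj (tright t)]).

(* Main.v *)
Require Import Defs.
From mathcomp Require Import all_boot zify.
From Stdlib Require Import ClassicalEpsilon FunctionalExtensionality Classical.
Set Implicit Arguments. Unset Strict Implicit. Unset Printing Implicit Defensive.

Lemma odd2 x : odd (2 * x) = false. Proof. by rewrite mul2n odd_double. Qed.
Lemma odd2S x : odd (2 * x).+1 = true. Proof. by rewrite /= odd2. Qed.
Lemma half2 x : (2 * x)./2 = x. Proof. by rewrite mul2n doubleK. Qed.
Lemma half2S x : ((2 * x).+1)./2 = x.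
Proof. by rewrite mul2n -add1n -[1]/(nat_of_bool true) half_bit_double. Qed.
Lemma decomp j : j = 2 * j./2 + odd j.
Proof. by rewrite -{1}(odd_double_half j) addnC mul2n. Qed.

Section Toolkit.
Variable L : language.
Variable C : structure L.
Variable c0 : C.

Lemma sat_ext (phi : formula L) : forall v v' : nat -> C,
  (forall j, v j = v' j) -> (sat C v phi <-> sat C v' phi).
Proof.
elim: phi => [s args|i j|f IH|f IHf g IHg|i f IH] v v' H /=.
- have -> : (fun x => v (args x)) = (fun x => v' (args x)).
    by apply: functional_extensionality => x; rewrite H.
  done.
- by rewrite !H.
- by rewrite (IH v v' H).
- by rewrite (IHf v v' H) (IHg v v' H).
- split=> -[a Ha]; exists a.
  + by rewrite -(IH (upd v i a)) // => j; rewrite /upd; case: eqP.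
  + by rewrite (IH _ (upd v' i a)) // => j; rewrite /upd; case: eqP.
Qed.

Lemma sat_exti (phi : formula L) (v v' : nat -> C) :
  (forall j, v j = v' j) -> sat C v phi -> sat C v' phi.
Proof. by move=> H; exact: (proj1 (sat_ext phi H)). Qed.

Fixpoint ren (r : nat -> nat) (phi : formula L) : formula L :=
  match phi with
  | FRel s0 args => @FRel L s0 (fun x => r (args x))
  | FEq i j => FEq L (r i) (r j)
  | FNot f => FNot (ren r f)
  | FAnd f g => FAnd (ren r f) (ren r g)
  | FEx i f => FEx (r i) (ren r f)
  end.

Lemma sat_ren (r : nat -> nat) (Hr : injective r) (phi : formula L) :
  forall v : nat -> C, sat C v (ren r phi) <-> sat C (fun j => v (r j)) phi.
Proof.
elim: phi => [s args|i j|f IH|f IHf g IHg|i f IH] v /=.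
- done.
- done.
- by rewrite IH.
- by rewrite IHf IHg.
- split=> -[a Ha]; exists a.
  + move/IH: Ha; apply: sat_exti => j; rewrite /upd (inj_eq Hr) //.
  + apply/IH; move: Ha; apply: sat_exti => j; rewrite /upd (inj_eq Hr) //.
Qed.

Fixpoint bnd (phi : formula L) : nat :=
  match phi with
  | FRel s args => \max_(x < arity s) (args x).+1
  | FEq i j => maxn i.+1 j.+1
  | FNot f => bnd f
  | FAnd f g => maxn (bnd f) (bnd g)
  | FEx i f => maxn i.+1 (bnd f)
  end.

Lemma sat_bnd (phi : formula L) : forall v v' : nat -> C,
  (forall j, j < bnd phi -> v j = v' j) -> (sat C v phi <-> sat C v' phi).
Proof.
elim: phi => [s args|i j|f IH|f IHf g IHg|i f IH] v v' H /=.
- have -> : (fun x => v (args x)) = (fun x => v' (args x)).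
    apply: functional_extensionality => x; apply: H.
    exact: (@leq_bigmax _ (fun x => (args x).+1) x).
  done.
- rewrite (H i) ?(H j) //; rewrite /= ?leq_max ?ltnSn ?orbT //.
- by rewrite (IH v v' H).
- rewrite (IHf v v') ?(IHg v v') // => j Hj; apply: H; rewrite /= leq_max Hj ?orbT //. 
- split=> -[a Ha]; exists a.
  + rewrite -(IH (upd v i a)) // => j Hj; rewrite /upd; case: eqP => // _;
    apply: H; rewrite /= leq_max Hj orbT //.
  + rewrite (IH _ (upd v' i a)) // => j Hj; rewrite /upd; case: eqP => // _;
    apply: H; rewrite /= leq_max Hj orbT //.
Qed.

Definition mixw (v w : nat -> C) : nat -> C :=
  fun j => if odd j then w j else v j./2.

Definition pdef (P : (nat -> C) -> Prop) :=
  exists (phi : formula L) (w : nat -> C), forall v, P v <-> sat C (mixw v w) phi.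

Lemma pdef_ext (P Q : (nat -> C) -> Prop) :
  (forall v, P v <-> Q v) -> pdef P -> pdef Q.
Proof. move=> H [phi [w Hw]]; exists phi, w => v; rewrite -H; exact: Hw. Qed.

Lemma pdef_not P : pdef P -> pdef (fun v => ~ P v).
Proof. move=> [phi [w Hw]]; exists (FNot phi), w => v /=; by rewrite Hw. Qed.

Lemma pdef_eqv i j : pdef (fun v => v i = v j).
Proof.
exists (FEq L (2 * i) (2 * j)), (fun _ => c0) => v /=.
by rewrite /mixw !odd2 !half2.
Qed.

Lemma pdef_eqc i c : pdef (fun v => v i = c).
Proof.
exists (FEq L (2 * i) 1), (fun _ => c) => v /=.
by rewrite /mixw odd2 half2.
Qed.

Lemma pdef_true : pdef (fun _ => True).
Proof. exists (FEq L 0 0), (fun _ => c0) => v /=; done. Qed.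

Definition s1 (j : nat) := if odd j then (2 * j).+1 else j.
Definition s2 (j : nat) := if odd j then (2 * j.+1).+1 else j.

Lemma s1_inj : injective s1.
Proof.
move=> x y; rewrite /s1 (decomp x) (decomp y).
case: (odd x); case: (odd y); rewrite /= ?addn0 ?addn1 ?odd2 ?odd2S /=; lia.
Qed.
Lemma s2_inj : injective s2.
Proof.
move=> x y; rewrite /s2 (decomp x) (decomp y).
case: (odd x); case: (odd y); rewrite /= ?addn0 ?addn1 ?odd2 ?odd2S /=; lia.
Qed.

Lemma pdef_and P Q : pdef P -> pdef Q -> pdef (fun v => P v /\ Q v).
Proof.
move=> [phi1 [w1 H1]] [phi2 [w2 H2]].
exists (FAnd (ren s1 phi1) (ren s2 phi2)),
  (fun x => if odd x./2 then w1 x./2 else w2 x./2.-1) => v /=.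
rewrite !sat_ren; [|exact: s2_inj|exact: s1_inj].
rewrite H1 H2; split=> -[A B]; split.
- move: A; apply: sat_exti => j; rewrite /mixw /s1; case Oj: (odd j); rewrite ?Oj //.
  by rewrite odd2S half2S Oj.
- move: B; apply: sat_exti => j; rewrite /mixw /s2; case Oj: (odd j); rewrite ?Oj //.
  by rewrite odd2S half2S /= Oj.
- move: A; apply: sat_exti => j; rewrite /mixw /s1; case Oj: (odd j); rewrite ?Oj //.
  by rewrite odd2S half2S Oj.
- move: B; apply: sat_exti => j; rewrite /mixw /s2; case Oj: (odd j); rewrite ?Oj //.
  by rewrite odd2S half2S /= Oj.
Qed.

Lemma pdef_or P Q : pdef P -> pdef Q -> pdef (fun v => P v \/ Q v).
Proof.
move=> HP HQ; apply: (pdef_ext (P := fun v => ~ (~ P v /\ ~ Q v))).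
  move=> v; tauto.
by apply/pdef_not/pdef_and; apply: pdef_not.
Qed.

Definition ovr (ps : seq nat) (f v : nat -> C) : nat -> C :=
  fun j => if j \in ps then f j else v j.

Lemma sat_exs (phi : formula L) (qs : seq nat) : forall v : nat -> C,
  sat C v (foldr (@FEx L) phi qs) <-> exists g, sat C (ovr qs g v) phi.
Proof.
elim: qs => [|p qs IH] v /=.
- split=> [H|[g H]]; first by exists v; move: H; apply: sat_exti.
  by move: H; apply: sat_exti.
- split.
  + move=> [a /IH [g Hg]].
    exists (fun j => if j \in qs then g j else a); move: Hg; apply: sat_exti => j.
    rewrite /ovr /upd in_cons; case: (j \in qs); rewrite ?orbT //.
    by case: eqP => [->|]; rewrite //= eqxx.
  + move=> [g Hg]; exists (g p); apply/IH; exists g; move: Hg; apply: sat_exti => j.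
    rewrite /ovr /upd in_cons; case: (j \in qs); rewrite ?orbT //.
    by case: eqP => [->|].
Qed.

Lemma pdef_exs (ps : seq nat) P :
  pdef P -> pdef (fun v => exists f, P (ovr ps f v)).
Proof.
move=> [phi [w H]]; exists (foldr (@FEx L) phi [seq 2 * i | i <- ps]), w => v.
rewrite sat_exs; split=> -[f Hf].
- exists (fun j => f j./2); move/H: Hf; apply: sat_exti => j.
  rewrite /ovr /mixw; case Oj: (odd j).
  + case: ifP => // /mapP [i _ E]; by rewrite E odd2 in Oj.
  + rewrite {3 4}(decomp j) Oj addn0 mem_map ?half2 //; move=> x y; lia.
- exists (fun i => f (2 * i)); rewrite H; move: Hf; apply: sat_exti => j.
  rewrite /ovr /mixw; case Oj: (odd j).
  + case: ifP => // /mapP [i _ E]; by rewrite E odd2 in Oj.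
  + rewrite {1 2}(decomp j) Oj addn0 mem_map //; last by move=> x y; lia.
Qed.


Lemma asg_l k l (x : 'I_k -> C) (b : 'I_l -> C) q (i : 'I_k) :
  asg (tcat x b) q i = x i.
Proof.
have E : (insub (nat_of_ord i) : option 'I_(k + l)) = Some (lshift l i).
  by rewrite -[nat_of_ord i]/(nat_of_ord (lshift l i)) valK.
by rewrite /asg E /tcat (unsplitK (@inl _ 'I_l i)).
Qed.

Lemma asg_r k l (x : 'I_k -> C) (b : 'I_l -> C) q (j : 'I_l) :
  asg (tcat x b) q (k + j) = b j.
Proof.
have E : (insub (k + j) : option 'I_(k + l)) = Some (rshift k j).
  by rewrite -[k + j]/(nat_of_ord (rshift k j)) valK.
by rewrite /asg E /tcat (unsplitK (@inr 'I_k _ j)).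
Qed.

Lemma asg_big k l (x : 'I_k -> C) (b : 'I_l -> C) q j :
  k + l <= j -> asg (tcat x b) q j = q j.
Proof. by move=> H; rewrite /asg insubF // ltnNge H. Qed.

Lemma def_pdef k (D : ('I_k -> C) -> Prop) N :
  definable D -> pdef (fun v => D (fun i => v (N + i))).
Proof.
move=> [l [b [phi [_ H]]]].
pose r := fun j => if j < k then 2 * (N + j) else
                   if j < k + l then (2 * (j - k)).+1 else (2 * j).+1.
have Hr : injective r.
  move=> x y; rewrite /r.
  case: (ltnP x k) => ?; case: (ltnP y k) => ?; case: (ltnP x (k + l)) => ?;
  case: (ltnP y (k + l)) => ?; lia.
pose w := fun x => match (insub (x./2) : option 'I_l) with
                   | Some i => b i | None => c0 end.
exists (ren r phi), w => v.
rewrite (H _ (fun j => mixw v w (r j))) sat_ren //.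
apply: sat_ext => j.
case: (ltnP j k) => Hjk.
- pose i := Ordinal Hjk; have -> : j = nat_of_ord i by [].
  by rewrite asg_l /mixw /r ltn_ord odd2 half2.
- case: (ltnP j (k + l)) => Hjl.
  + have Hi : j - k < l by lia.
    pose i := Ordinal Hi; have -> : j = k + i by rewrite /= subnKC.
    rewrite asg_r /mixw /r ltnNge leq_addr /= ltn_add2l ?ltn_ord ?Hi addKn odd2S.
    rewrite /w half2S -[j - k]/(nat_of_ord i) valK //.
  + by rewrite asg_big.
Qed.

Lemma pdef_def k (G : ('I_k -> C) -> Prop) :
  pdef (fun v => G (fun i => v (nat_of_ord i))) -> definable G.
Proof.
move=> [phi [w H]]; set N := bnd phi.
pose r := fun j => if odd j then (if j./2 < N then k + j./2 else k + N + 2 * j)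
                   else (if j./2 < k then j./2 else k + N + 2 * j).
have Hr : injective r.
  move=> x y; rewrite /r; move: (decomp x) (decomp y).
  set mx := x./2; set my := y./2; case: (odd x); case: (odd y) => /= Ex Ey;
  case: (ltnP mx N) => ?; case: (ltnP my N) => ?;
  case: (ltnP mx k) => ?; case: (ltnP my k) => ?; lia.
exists N, (fun m : 'I_N => w (2 * m).+1), (ren r phi); split => // a q.
pose v := fun i => match (insub i : option 'I_k) with
                   | Some i' => a i' | None => q (k + N + 2 * (2 * i)) end.
have -> : a = (fun i => v (nat_of_ord i)).
  by apply: functional_extensionality => i; rewrite /v valK.
rewrite H sat_ren //; apply: sat_bnd => j Hj.
rewrite /mixw /r; move: (decomp j); set m := j./2; case Oj: (odd j) => /= Ej.
- have Hm : m < N by lia.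
  pose i := Ordinal Hm; rewrite Hm.
  have -> : k + m = k + i by [].
  by rewrite asg_r Ej addn1.
- case: (ltnP m k) => Hmk.
  + pose i := Ordinal Hmk; have -> : m = nat_of_ord i by [].
    by rewrite asg_l /v valK.
  + rewrite asg_big; last by lia.
    rewrite /v insubF; last by rewrite ltnNge Hmk.
    by rewrite Ej addn0.
Qed.

Lemma pdef_all_seq (T : eqType) (s : seq T) (P : T -> (nat -> C) -> Prop) :
  (forall x, pdef (P x)) -> pdef (fun v => forall x, x \in s -> P x v).
Proof.
move=> HP; elim: s => [|x s IH].
- by apply: pdef_ext (pdef_true) => v; split.
- apply: pdef_ext (pdef_and (HP x) IH) => v; split.
  + move=> [H1 H2] y; rewrite in_cons => /orP [/eqP ->|] //; exact: H2.
  + move=> H; split; [apply: H; exact: mem_head|move=> y Hy; apply: H; rewrite in_cons Hy orbT //].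
Qed.

Lemma pdef_all_ord k (P : 'I_k -> (nat -> C) -> Prop) :
  (forall i, pdef (P i)) -> pdef (fun v => forall i, P i v).
Proof.
move=> HP; apply: pdef_ext (pdef_all_seq (enum 'I_k) HP) => v; split.
- move=> H i; apply: H; exact: mem_enum.
- by move=> H i _.
Qed.

Lemma pdef_ex_ord k (P : 'I_k -> (nat -> C) -> Prop) :
  (forall i, pdef (P i)) -> pdef (fun v => exists i, P i v).
Proof.
move=> HP; apply: pdef_ext (pdef_not (pdef_all_ord (fun i => pdef_not (HP i)))) => v.
split; [exact: not_all_not_ex | move=> [i Hi] H; exact: H i Hi].
Qed.

Definition placedc k (tau : 'I_k -> nat + C) (v : nat -> C) : 'I_k -> C :=
  fun i => match tau i with inl j => v j | inr c => c end.

Definition tbound k (tau : 'I_k -> nat + C) :=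
  \max_(i < k) (match tau i with inl j => j.+1 | inr _ => 0 end).

Lemma tbound_lt k (tau : 'I_k -> nat + C) i j : tau i = inl j -> j < tbound tau.
Proof.
move=> E; have := @leq_bigmax _ (fun i => match tau i with inl j => j.+1 | inr _ => 0 end) i.
by rewrite /tbound E.
Qed.

Lemma placedc_loc k (tau : 'I_k -> nat + C) W (v v' : nat -> C) :
  tbound tau <= W -> (forall j, j < W -> v j = v' j) -> placedc tau v = placedc tau v'.
Proof.
move=> HW H; apply: functional_extensionality => i; rewrite /placedc.
case E: (tau i) => [j|c] //; apply: H; apply: leq_trans HW; exact: tbound_lt E.
Qed.

Lemma pdef_placedc k (D : ('I_k -> C) -> Prop) (tau : 'I_k -> nat + C) :
  definable D -> pdef (fun v => D (placedc tau v)).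
Proof.
move=> HD; set N := tbound tau.
have HQ : pdef (fun v => (forall i : 'I_k, v (N + i) = placedc tau v i) /\ D (fun i => v (N + i))).
  apply: pdef_and; last exact: def_pdef.
  apply: pdef_all_ord => i; rewrite /placedc; case: (tau i) => [j|c].
  - exact: pdef_eqv. - exact: pdef_eqc.
apply: pdef_ext (pdef_exs (iota N k) HQ) => v.
have Hloc : forall f, placedc tau (ovr (iota N k) f v) = placedc tau v.
  move=> f; apply: (placedc_loc (W := N)) => // j Hj.
  by rewrite /ovr mem_iota leqNgt Hj.
split.
- move=> [f [H1 H2]].
  have <- : (fun i : 'I_k => ovr (iota N k) f v (N + i)) = placedc tau v => //.
  apply: functional_extensionality => i; by rewrite H1 Hloc.
- move=> HDv.
  exists (fun j => match (insub (j - N) : option 'I_k) with Some i => placedc tau v i | None => c0 end).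
  have E : forall i : 'I_k, ovr (iota N k)
     (fun j => match (insub (j - N) : option 'I_k) with Some i => placedc tau v i | None => c0 end)
     v (N + i) = placedc tau v i.
    by move=> i; rewrite /ovr mem_iota leq_addr ltn_add2l ltn_ord addKn valK.
  split; first by move=> i; rewrite E Hloc.
  have -> : (fun i : 'I_k => ovr (iota N k)
     (fun j => match (insub (j - N) : option 'I_k) with Some i => placedc tau v i | None => c0 end)
     v (N + i)) = placedc tau v by apply: functional_extensionality => i; rewrite E.
  done.
Qed.

Lemma pdef_exblock k W (Q : (nat -> C) -> ('I_k -> C) -> Prop) :
  (forall v v' s, (forall j, j < W -> v j = v' j) -> Q v s -> Q v' s) ->
  pdef (fun v => Q v (fun i => v (W + i))) ->
  pdef (fun v => exists s, Q v s).
Proof.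
move=> Hloc HQ; apply: pdef_ext (pdef_exs (iota W k) HQ) => v.
have Hag : forall f j, j < W -> ovr (iota W k) f v j = v j.
  by move=> f j Hj; rewrite /ovr mem_iota leqNgt Hj.
split.
- move=> [f Hf]; exists (fun i => ovr (iota W k) f v (W + i)).
  apply: Hloc Hf => j Hj; exact: Hag.
- move=> [s Hs].
  exists (fun j => match (insub (j - W) : option 'I_k) with Some i => s i | None => c0 end).
  have -> : (fun i : 'I_k => ovr (iota W k)
     (fun j => match (insub (j - W) : option 'I_k) with Some i => s i | None => c0 end)
     v (W + i)) = s.
    apply: functional_extensionality => i.
    by rewrite /ovr mem_iota leq_addr ltn_add2l ltn_ord addKn valK.
  apply: Hloc Hs => j Hj; by rewrite Hag.
Qed.


Lemma tbound_le k (tau : 'I_k -> nat + C) W :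
  (forall i j, tau i = inl j -> j < W) -> tbound tau <= W.
Proof.
move=> H; apply/bigmax_leqP => i _; case E: (tau i) => [j|c] //; exact: H E.
Qed.

Lemma tcat_placedc k l (t1 : 'I_k -> nat + C) (t2 : 'I_l -> nat + C) v :
  tcat (placedc t1 v) (placedc t2 v) = placedc (tcat t1 t2) v.
Proof. by apply: functional_extensionality => x; rewrite /tcat /placedc; case: (split x). Qed.

Lemma pdef1 (X : C -> Prop) j : definable1 X -> pdef (fun v => X (v j)).
Proof. move=> H; exact: (pdef_placedc (fun _ : 'I_1 => inl j) H). Qed.

End Toolkit.

Lemma tleft_tcat (M : Type) k l (a : 'I_k -> M) (b : 'I_l -> M) : tleft (tcat a b) = a.
Proof. by apply: functional_extensionality => x; rewrite /tleft /tcat (unsplitK (@inl _ 'I_l x)). Qed.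
Lemma tright_tcat (M : Type) k l (a : 'I_k -> M) (b : 'I_l -> M) : tright (tcat a b) = b.
Proof. by apply: functional_extensionality => x; rewrite /tright /tcat (unsplitK (@inr 'I_k _ x)). Qed.

Lemma ex_min_ord m (P : 'I_m -> Prop) :
  (exists k, P k) -> exists k, P k /\ forall k' : 'I_m, k' < k -> ~ P k'.
Proof.
move=> [k Hk]; apply: NNPP => Hn.
suff H : forall n (k' : 'I_m), k' < n -> ~ P k' by exact: (H k.+1 k (ltnSn _) Hk).
elim=> [|n IH] k' Hk' Pk' //.
apply: Hn; exists k'; split => // k'' H''; apply: IH; lia.
Qed.

Definition pb (P : Prop) : bool := if excluded_middle_informative P then true else false.
Lemma pbP P : pb P = true <-> P.
Proof. by rewrite /pb; case: excluded_middle_informative. Qed.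

Section Grp.
Variables (L : language) (C : structure L) (Z R : C -> Prop) (G : eq_group C).
Hypothesis HG : def_group Z R G.

Lemma g_assoc (x y z : eg_car G) : eg_mul x (eg_mul y z) = eg_mul (eg_mul x y) z.
Proof. by case: HG => _ [_ [_ [_ [_ [H _]]]]]. Qed.
Lemma g_mul1 (x : eg_car G) : eg_mul (eg_one G) x = x.
Proof. by case: HG => _ [_ [_ [_ [_ [_ [H _]]]]]]. Qed.
Lemma g_mulV (x : eg_car G) : eg_mul (eg_inv x) x = eg_one G.
Proof. by case: HG => _ [_ [_ [_ [_ [_ [_ H]]]]]]. Qed.
Lemma g_mulVr (x : eg_car G) : eg_mul x (eg_inv x) = eg_one G.
Proof.
set y := eg_mul x (eg_inv x).
have -> : y = eg_mul (eg_mul (eg_inv (eg_inv x)) (eg_inv x)) y by rewrite g_mulV g_mul1.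
rewrite -g_assoc /y (g_assoc (eg_inv x) x) g_mulV g_mul1 g_mulV //.
Qed.
Lemma g_mulr1 (x : eg_car G) : eg_mul x (eg_one G) = x.
Proof. by rewrite -(g_mulV x) g_assoc g_mulVr g_mul1. Qed.
Lemma g_idem (x : eg_car G) : eg_mul x x = x -> x = eg_one G.
Proof.
move=> H; have : eg_mul (eg_inv x) (eg_mul x x) = eg_mul (eg_inv x) x by rewrite H.
by rewrite g_assoc g_mulV g_mul1.
Qed.
Lemma g_sort (t : 'I_(eg_k G) -> C) : eg_dom t -> sortset Z R (@eg_col C G) t.
Proof. by case: HG => H _; apply: H. Qed.
Lemma g_ddom : definable (@eg_dom C G).
Proof. by case: HG => _ []. Qed.
Lemma g_surj (g : eg_car G) : exists t : 'I_(eg_k G) -> C, eg_dom t /\ eg_proj t = g.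
Proof. by case: HG => _ [_ [H _]]. Qed.
Lemma g_dE : definable (fun t : 'I_(eg_k G + eg_k G) -> C =>
     [/\ eg_dom (tleft t), eg_dom (tright t) & eg_proj (tleft t) = eg_proj (tright t)]).
Proof. by case: HG => _ [_ [_ [H _]]]. Qed.
Lemma g_dM : definable (fun t : 'I_((eg_k G + eg_k G) + eg_k G) -> C =>
     [/\ eg_dom (tleft (tleft t)), eg_dom (tright (tleft t)), eg_dom (tright t) &
         eg_proj (tright t) = eg_mul (eg_proj (tleft (tleft t))) (eg_proj (tright (tleft t)))]).
Proof. by case: HG => _ [_ [_ [_ [H _]]]]. Qed.
End Grp.

Lemma Rall_tcat (M : Type) (P : M -> Prop) k l (a : 'I_k -> M) (b : 'I_l -> M) :
  (forall j, P (a j)) -> (forall j, P (b j)) -> forall j, P (tcat a b j).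
Proof. by move=> Ha Hb j; rewrite /tcat; case: (split j). Qed.

Section Core.
Variables (L : language) (C : structure L) (c0 : C) (Z R : C -> Prop)
  (A B Cg : eq_group C) (i : eg_car A -> eg_car B) (f : eg_car B -> eg_car Cg).
Hypotheses (HR1 : definable1 R)
  (HA : def_group Z R A) (HB : def_group Z R B) (HC : def_group Z R Cg)
  (Hi : def_hom i) (Hf : def_hom f)
  (Hker : forall b, f b = eg_one Cg <-> exists a, i a = b).
Variables (na : nat) (hA : ('I_na -> C) -> eg_car A)
          (nc : nat) (hC : ('I_nc -> C) -> eg_car Cg).
Hypotheses (HhAs : forall g, exists r, (forall j, R (r j)) /\ hA r = g)
  (HhAd : definable (fun t : 'I_(na + eg_k A) -> C =>
      [/\ (forall j, R (tleft t j)), eg_dom (tright t) & hA (tleft t) = eg_proj (tright t)]))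
  (HhCs : forall g, exists r, (forall j, R (r j)) /\ hC r = g)
  (HhCd : definable (fun t : 'I_(nc + eg_k Cg) -> C =>
      [/\ (forall j, R (tleft t j)), eg_dom (tright t) & hC (tleft t) = eg_proj (tright t)])).
Variables (p q : nat) (sel : 'I_(eg_k B) -> 'I_p + 'I_q).

Local Notation kA := (eg_k A).
Local Notation kB := (eg_k B).
Local Notation kC := (eg_k Cg).

Definition Mg (x : 'I_p -> C) (y : 'I_q -> C) : 'I_kB -> C :=
  fun j => match sel j with inl a => x a | inr b => y b end.
Definition Gam (rc : 'I_nc -> C) (u : 'I_kB -> C) := eg_dom u /\ f (eg_proj u) = hC rc.
Definition fG := fun t : 'I_(kB + kC) -> C =>
  [/\ eg_dom (tleft t), eg_dom (tright t) & f (eg_proj (tleft t)) = eg_proj (tright t)].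
Definition hCG := fun t : 'I_(nc + kC) -> C =>
  [/\ (forall j, R (tleft t j)), eg_dom (tright t) & hC (tleft t) = eg_proj (tright t)].

Lemma GamE rc u : (forall j, R (rc j)) ->
  Gam rc u <-> exists w : 'I_kC -> C, fG (tcat u w) /\ hCG (tcat rc w).
Proof.
move=> Hrc; rewrite /Gam /fG /hCG; split.
- move=> [Hd He]; have [w [Hw Ew]] := g_surj HC (f (eg_proj u)).
  exists w; rewrite !tleft_tcat !tright_tcat; split; split => //; by rewrite -He.
- move=> [w []]; rewrite !tleft_tcat !tright_tcat => -[d1 d2 e1] [r1 d3 e2].
  by split => //; rewrite e1 e2.
Qed.

Lemma pdef_Gam (tu : 'I_kB -> nat + C) (tr : 'I_nc -> nat + C) W :
  tbound tu <= W -> tbound tr <= W ->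
  pdef (fun v : nat -> C => exists w : 'I_kC -> C, fG (tcat (placedc tu v) w) /\ hCG (tcat (placedc tr v) w)).
Proof.
move=> Hu Hr.
apply: (@pdef_exblock _ _ c0 kC W (fun v s => fG (tcat (placedc tu v) s) /\ hCG (tcat (placedc tr v) s))).
- by move=> v v' s H; rewrite (placedc_loc Hu H) (placedc_loc Hr H).
- apply: pdef_ext (pdef_and (pdef_placedc c0 (tcat tu (fun i0 => inl (W + i0))) (proj1 Hf))
                            (pdef_placedc c0 (tcat tr (fun i0 => inl (W + i0))) HhCd)) => v.
  by rewrite -!tcat_placedc.
Qed.


Section WithZ.
Variables (m : nat) (z : 'I_m -> 'I_p -> C).
Hypothesis Hz : forall rc : 'I_nc -> C, (forall j, R (rc j)) ->
  exists k (y : 'I_q -> C), (forall j, R (y j)) /\ Gam rc (Mg (z k) y).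

Local Notation n := (na + nc + q).
Definition rav (r : 'I_n -> C) : 'I_na -> C := tleft (tleft r).
Definition rcv (r : 'I_n -> C) : 'I_nc -> C := tright (tleft r).
Definition yv (r : 'I_n -> C) : 'I_q -> C := tright r.
Definition Gk k r := Gam (rcv r) (Mg (z k) (yv r)).
Definition valk k r := eg_mul (eg_proj (Mg (z k) (yv r))) (i (hA (rav r))).
Definition hfun r : eg_car B :=
  match [pick k : 'I_m | pb (Gk k r) && [forall k' : 'I_m, (k' < k) ==> ~~ pb (Gk k' r)]] with
  | Some k => valk k r | None => eg_one B end.

Lemma hfunE r X : hfun r = X <->
  (exists k, Gk k r /\ (forall k' : 'I_m, k' < k -> ~ Gk k' r) /\ valk k r = X) \/
  ((forall k, ~ Gk k r) /\ eg_one B = X).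
Proof.
rewrite /hfun; case: pickP => [k /andP [/pbP H1 /forallP H2] | H].
- have Hmin : forall k' : 'I_m, k' < k -> ~ Gk k' r.
    move=> k' Hlt HG; move: (H2 k'); rewrite Hlt /= => /negP; apply; exact/pbP.
  split; first by move=> <-; left; exists k.
  case=> [[k2 [G2 [M2 <-]]] | [Hn _]]; last by case: (Hn k).
  have -> // : k = k2.
  apply: val_inj; apply/eqP; rewrite eqn_leq; apply/andP; split; rewrite leqNgt; apply/negP => Hc.
  + exact: Hmin k2 Hc G2.
  + exact: M2 k Hc H1.
- have Hn : forall k : 'I_m, ~ Gk k r.
    move=> k Hk; have [k1 [G1 M1]] := ex_min_ord (ex_intro (fun k => Gk k r) k Hk).
    have H3 : [forall k' : 'I_m, (k' < k1) ==> ~~ pb (Gk k' r)].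
      apply/forallP => k'; apply/implyP => Hlt; apply/negP => /pbP; exact: M1 k' Hlt.
    by move: (H k1); rewrite (proj2 (pbP _) G1) H3.
  split; first by move=> <-; right.
  case=> [[k [Gk1 _]]|[_ ->]] //; by case: (Hn k).
Qed.

Lemma f_one : f (eg_one B) = eg_one Cg.
Proof. apply: (g_idem HC); by rewrite -(proj2 Hf) (g_mul1 HB). Qed.

Lemma hfun_surj b : exists r, (forall j, R (r j)) /\ hfun r = b.
Proof.
have [rc [Hrc Erc]] := HhCs (f b).
have [k [y [Hy HG]]] := Hz Hrc.
have [k1 [G1 M1]] := ex_min_ord (ex_intro (fun k => Gam rc (Mg (z k) y)) k HG).
set x := eg_proj (Mg (z k1) y).
have Hfx : f x = f b by case: G1 => _ ->.
have Hk : f (eg_mul (eg_inv x) b) = eg_one Cg.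
  by rewrite (proj2 Hf) -Hfx -(proj2 Hf) (g_mulV HB) f_one.
have [a Ea] := proj1 (Hker _) Hk.
have [ra [Hra Era]] := HhAs a.
exists (tcat (tcat ra rc) y); split; first by apply: Rall_tcat => //; apply: Rall_tcat.
apply/hfunE; left; exists k1.
rewrite /Gk /valk /rcv /yv /rav !tleft_tcat !tright_tcat; split => //; split => //.
by rewrite Era Ea -/x (g_assoc HB) (g_mulVr HB) (g_mul1 HB).
Qed.


Definition hAG := fun t : 'I_(na + kA) -> C =>
  [/\ (forall j, R (tleft t j)), eg_dom (tright t) & hA (tleft t) = eg_proj (tright t)].
Definition iG := fun t : 'I_(kA + kB) -> C =>
  [/\ eg_dom (tleft t), eg_dom (tright t) & i (eg_proj (tleft t)) = eg_proj (tright t)].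
Definition mG := fun t : 'I_((kB + kB) + kB) -> C =>
  [/\ eg_dom (tleft (tleft t)), eg_dom (tright (tleft t)), eg_dom (tright t) &
      eg_proj (tright t) = eg_mul (eg_proj (tleft (tleft t))) (eg_proj (tright (tleft t)))].
Definition EG := fun t : 'I_(kB + kB) -> C =>
  [/\ eg_dom (tleft t), eg_dom (tright t) & eg_proj (tleft t) = eg_proj (tright t)].

Definition tau_tb : 'I_kB -> nat + C := fun i0 => inl (n + i0).
Definition tau_ra : 'I_na -> nat + C := fun j => inl (nat_of_ord j).
Definition tau_rc : 'I_nc -> nat + C := fun j => inl (na + j).
Definition tau_u k : 'I_kB -> nat + C := fun i0 =>
  match sel i0 with inl a => inr (z k a) | inr b => inl (na + nc + b) end.

Lemma Mg_placed k (v : nat -> C) : Mg (z k) (yv (fun j : 'I_n => v (nat_of_ord j))) = placedc (tau_u k) v.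
Proof. by apply: functional_extensionality => i0; rewrite /Mg /placedc /tau_u; case: (sel i0). Qed.

Lemma GkE k (v : nat -> C) : (forall j : 'I_n, R (v j)) ->
  Gk k (fun j : 'I_n => v (nat_of_ord j)) <->
  exists w, fG (tcat (placedc (tau_u k) v) w) /\ hCG (tcat (placedc tau_rc v) w).
Proof.
move=> HR; rewrite /Gk Mg_placed GamE //.
move=> j; exact: (HR (lshift q (rshift na j))).
Qed.

Lemma valE k (v : nat -> C) : (forall j : 'I_n, R (v j)) -> eg_dom (placedc tau_tb v) ->
  Gk k (fun j : 'I_n => v (nat_of_ord j)) ->
  (valk k (fun j : 'I_n => v (nat_of_ord j)) = eg_proj (placedc tau_tb v) <->
   exists (s : 'I_kA -> C) (s' : 'I_kB -> C), hAG (tcat (placedc tau_ra v) s) /\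
     iG (tcat s s') /\ mG (tcat (tcat (placedc (tau_u k) v) s') (placedc tau_tb v))).
Proof.
move=> HR Hd; rewrite /Gk /valk Mg_placed => -[Hu _].
rewrite /hAG /iG /mG; split.
- move=> E.
  have [s [ds Es]] := g_surj HA (hA (rav (fun j : 'I_n => v (nat_of_ord j)))).
  have [s' [ds' Es']] := g_surj HB (i (eg_proj s)).
  exists s, s'; rewrite !tleft_tcat !tright_tcat; split; [|split].
  + split; [move=> j; exact: (HR (lshift q (lshift nc j)))|done|by rewrite Es].
  + by split.
  + by split => //; rewrite -E Es' Es.
- move=> [s [s' []]]; rewrite !tleft_tcat !tright_tcat.
  move=> [_ ds Es] [[_ ds' Es'] [_ _ _ E]].
  by rewrite E -Es' -Es.
Qed.

Lemma hfun_def : definable (fun t : 'I_(n + kB) -> C =>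
  [/\ (forall j, R (tleft t j)), eg_dom (tright t) & hfun (tleft t) = eg_proj (tright t)]).
Proof.
have [e0 [He0 Ee0]] := g_surj HB (eg_one B).
pose W := n + kB.
have Btb : tbound tau_tb <= W by apply: tbound_le => i0 j0 [<-]; rewrite /W ltn_add2l.
have Bra : tbound tau_ra <= W.
  apply: tbound_le => i0 j0 [<-]; rewrite /W; have := ltn_ord i0; lia.
have Brc : tbound tau_rc <= W.
  apply: tbound_le => i0 j0 [<-]; rewrite /W; have := ltn_ord i0; lia.
have Bu : forall k, tbound (tau_u k) <= W.
  move=> k; apply: tbound_le => i0 j0; rewrite /tau_u; case: (sel i0) => // b [<-].
  rewrite /W; have := ltn_ord b; lia.
have PG := fun k => pdef_Gam (Bu k) Brc.
have PV : forall k, pdef (fun v : nat -> C => exists (s : 'I_kA -> C) (s' : 'I_kB -> C),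
     hAG (tcat (placedc tau_ra v) s) /\ iG (tcat s s') /\
     mG (tcat (tcat (placedc (tau_u k) v) s') (placedc tau_tb v))).
  move=> k.
  apply: (@pdef_exblock _ _ c0 kA W (fun v s => exists s' : 'I_kB -> C,
     hAG (tcat (placedc tau_ra v) s) /\ iG (tcat s s') /\
     mG (tcat (tcat (placedc (tau_u k) v) s') (placedc tau_tb v)))).
  - move=> v v' s H.
    by rewrite (placedc_loc Bra H) (placedc_loc (Bu k) H) (placedc_loc Btb H).
  - apply: (@pdef_exblock _ _ c0 kB (W + kA) (fun v s' =>
       hAG (tcat (placedc tau_ra v) (fun i0 : 'I_kA => v (W + i0))) /\
       iG (tcat (fun i0 : 'I_kA => v (W + i0)) s') /\
       mG (tcat (tcat (placedc (tau_u k) v) s') (placedc tau_tb v)))).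
    + move=> v v' s H.
      have E1 : (fun i0 : 'I_kA => v (W + i0)) = (fun i0 : 'I_kA => v' (W + i0)).
        by apply: functional_extensionality => i0; apply: H; rewrite ltn_add2l.
      have HW : forall j, j < W -> v j = v' j by move=> j Hj; apply: H; lia.
      by rewrite E1 (placedc_loc Bra HW) (placedc_loc (Bu k) HW) (placedc_loc Btb HW).
    + apply: pdef_ext (pdef_and (pdef_placedc c0 (tcat tau_ra (fun i0 : 'I_kA => inl (W + i0))) HhAd)
        (pdef_and (pdef_placedc c0 (tcat (fun i0 : 'I_kA => inl (W + i0))
                                          (fun i0 : 'I_kB => inl (W + kA + i0))) (proj1 Hi))
                  (pdef_placedc c0 (tcat (tcat (tau_u k) (fun i0 : 'I_kB => inl (W + kA + i0))) tau_tb)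
                                (g_dM HB)))) => v.
      rewrite -!tcat_placedc; reflexivity.
have PM : forall k : 'I_m, pdef (fun v : nat -> C => forall k' : 'I_m, k' < k ->
    ~ exists w, fG (tcat (placedc (tau_u k') v) w) /\ hCG (tcat (placedc tau_rc v) w)).
  move=> k; apply: (pdef_all_ord c0) => k'; case H: (k' < k).
  - apply: pdef_ext (pdef_not (PG k')) => v; split; [by move=> HN _|move=> HN; exact: (HN isT)].
  - by apply: pdef_ext (pdef_true c0) => v; split.
apply: pdef_def.
apply: pdef_ext (pdef_and (pdef_all_ord c0 (fun j : 'I_n => pdef1 c0 j HR1))
  (pdef_and (pdef_placedc c0 tau_tb (g_ddom HB))
   (pdef_or (pdef_ex_ord c0 (fun k => pdef_and (PG k) (pdef_and (PM k) (PV k))))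
            (pdef_and (pdef_all_ord c0 (fun k => pdef_not (PG k)))
                      (pdef_placedc c0 (tcat tau_tb (fun i0 => inr (e0 i0))) (g_dE HB)))))) => v /=.
rewrite -tcat_placedc.
split.
- move=> [HR [Hd H]]; split => //; apply/hfunE; case: H => [[k [G1 [M1 V1]]]|[N1 E1]].
  + have G1' := proj2 (GkE k HR) G1.
    left; exists k; split => //; split.
    * move=> k' Hk' G2; apply: (M1 k' Hk'); exact: (proj1 (GkE k' HR) G2).
    * exact: (proj2 (valE HR Hd G1') V1).
  + right; split.
    * move=> k G2; apply: (N1 k); exact: (proj1 (GkE k HR) G2).
    * move: E1; rewrite /EG tleft_tcat tright_tcat => -[_ _ E].
      by rewrite E Ee0.
- move=> [HR Hd H]; split => //; split => //.
  case/hfunE: H => [[k [G1 [M1 V1]]]|[N1 E1]].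
  + left; exists k; split; first exact: (proj1 (GkE k HR) G1).
    split.
    * move=> k' Hk' G2; apply: (M1 k' Hk'); exact: (proj2 (GkE k' HR) G2).
    * exact: (proj1 (valE HR Hd G1) V1).
  + right; split.
    * move=> k G2; apply: (N1 k); exact: (proj2 (GkE k HR) G2).
    * rewrite /EG tleft_tcat tright_tcat; split => //.
      by rewrite -E1 Ee0.
Qed.


Lemma R_internal_B : R_internal R B.
Proof. exists (na + nc + q), hfun; split; [exact: hfun_surj|exact: hfun_def]. Qed.

End WithZ.

Hypotheses (HZ1 : definable1 Z) (Hortho : fully_orthogonal Z R)
  (Hsurj : forall c, exists b, f b = c)
  (Hcov : forall t : 'I_kB -> C, eg_dom t ->
     exists x y, (forall i0, Z (x i0)) /\ (forall j, R (y j)) /\ Mg x y = t).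

Definition zof k (P : ('I_k -> C) -> Prop) : 'I_k -> C :=
  match excluded_middle_informative (exists x, P x) with
  | left H => proj1_sig (constructive_indefinite_description _ H)
  | right _ => fun _ => c0 end.

Lemma zofP k (P : ('I_k -> C) -> Prop) : (exists x, P x) -> P (zof P).
Proof.
rewrite /zof => H; case: excluded_middle_informative => // H'.
exact: proj2_sig (constructive_indefinite_description _ H').
Qed.

Definition Dset := fun T : 'I_(p + (nc + q)) -> C =>
  [/\ forall i0, Z (tleft T i0), forall j, R (tright T j) &
      Gam (tleft (tright T)) (Mg (tleft T) (tright (tright T)))].

Lemma Dset_def : definable Dset.
Proof.
pose W := p + (nc + q).
pose tM : 'I_kB -> nat + C := fun i0 =>
  match sel i0 with inl a => inl (nat_of_ord a) | inr b => inl (p + (nc + b)) end.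
pose tR : 'I_nc -> nat + C := fun j => inl (p + j).
have BM : tbound tM <= W.
  apply: tbound_le => i0 j0; rewrite /tM; case: (sel i0) => b [<-]; rewrite /W;
  have := ltn_ord b; lia.
have BR : tbound tR <= W.
  apply: tbound_le => i0 j0 [<-]; rewrite /W; have := ltn_ord i0; lia.
apply: pdef_def.
apply: pdef_ext (pdef_and (pdef_all_ord c0 (fun i0 : 'I_p => pdef1 c0 i0 HZ1))
   (pdef_and (pdef_all_ord c0 (fun j : 'I_(nc + q) => pdef1 c0 (p + j) HR1))
             (pdef_Gam BM BR))) => v /=.
have EM : Mg (fun i0 : 'I_p => v (nat_of_ord i0)) (fun j : 'I_q => v (p + (nc + j))) = placedc tM v.
  by apply: functional_extensionality => i0; rewrite /Mg /placedc /tM; case: (sel i0).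
split.
- move=> [HZ [HR HG]]; split => //.
  rewrite /tleft /tright /= EM GamE //.
  move=> j; exact: (HR (lshift q j)).
- move=> [HZ HR HG]; split => //; split => //.
  move: HG; rewrite /tleft /tright /= EM GamE //.
  move=> j; exact: (HR (lshift q j)).
Qed.

Lemma exists_z : exists m (z : 'I_m -> 'I_p -> C),
  forall rc : 'I_nc -> C, (forall j, R (rc j)) ->
  exists k (y : 'I_q -> C), (forall j, R (y j)) /\ Gam rc (Mg (z k) y).
Proof.
have [s [_ Hs]] := Hortho Dset_def (fun t Ht => let: And3 a b _ := Ht in conj a b).
pose d := ((fun _ : 'I_p -> C => False), (fun _ : 'I_(nc + q) -> C => False)).
exists (List.length s), (fun k => zof (List.nth k s d).1) => rc Hrc.
have [b Eb] := Hsurj (hC rc).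
have [t [Ht Et]] := g_surj HB b.
have [x [y [Hx [Hy Exy]]]] := Hcov Ht.
have HD : Dset (tcat x (tcat rc y)).
  rewrite /Dset !tleft_tcat !tright_tcat tleft_tcat; split => //.
  - by apply: Rall_tcat.
  - by rewrite Exy /Gam Et Eb.
have [pr [Inpr [H1 H2]]] := proj1 (Hs _) HD.
have [n0 [Hn0 En0]] := List.In_nth s pr d Inpr.
have Hn0' : n0 < List.length s by apply/ltP.
exists (Ordinal Hn0'), y; split => //.
have HD' : Dset (tcat (zof (List.nth n0 s d).1) (tcat rc y)).
  apply/(Hs _); exists pr; split => //.
  rewrite tleft_tcat tright_tcat En0; split.
  - apply: zofP; exists x; by rewrite tleft_tcat in H1.
  - by rewrite tright_tcat in H2.
move: HD'; rewrite /Dset !tleft_tcat !tright_tcat tleft_tcat => -[_ _ G].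
exact: G.
Qed.

Lemma R_int_final : R_internal R B.
Proof. have [m [z Hz]] := exists_z; exact: (R_internal_B Hz). Qed.

End Core.

Theorem lemma8p2 (L : language) (C : structure L) (Z R : C -> Prop)
  (A B Cg : eq_group C) (i : eg_car A -> eg_car B) (f : eg_car B -> eg_car Cg) :
  monster C ->
  definable1 Z -> definable1 R ->
  stably_embedded Z -> stably_embedded R -> fully_orthogonal Z R ->
  def_group Z R A -> def_group Z R B -> def_group Z R Cg ->
  def_hom i -> def_hom f ->
  injective i -> (forall c, exists b, f b = c) ->
  (forall b, f b = eg_one Cg <-> exists a, i a = b) ->
  R_internal R A -> R_internal R Cg ->
  R_internal R B.
Proof.
move=> [_ Hcard] HZ1 HR1 _ _ Hortho HA HB HC Hi Hf _ Hsurj Hker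
  [na [hA [HhAs HhAd]]] [nc [hC [HhCs HhCd]]].
have [c0 _] : exists c : C, True.
  apply: NNPP => Hn; case: Hcard => _; apply.
  exists (fun c : C => False_rect (sym L) (Hn (ex_intro _ c I))).
  move=> x; exfalso; exact: Hn (ex_intro _ x I).
case: (classic (exists z0, Z z0)) => [[z0 Hz0]|HnZ].
- case: (classic (exists r0, R r0)) => [[r0 Hr0]|HnR].
  + apply: (@R_int_final _ _ c0 _ _ _ _ _ _ _ HR1 HA HB HC Hi Hf Hker _ _ _ _ HhAs HhAd HhCs HhCd
        (eg_k B) (eg_k B) (fun i0 => if @eg_col C B i0 then inl i0 else inr i0) HZ1 Hortho Hsurj).
    move=> t Ht; have Hs := g_sort HB Ht.
    exists (fun i0 => if @eg_col C B i0 then t i0 else z0),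
           (fun i0 => if @eg_col C B i0 then r0 else t i0).
    split; [|split].
    * move=> i0; move: (Hs i0); by case: (@eg_col C B i0).
    * move=> i0; move: (Hs i0); by case: (@eg_col C B i0).
    * apply: functional_extensionality => i0; rewrite /Mg.
      by case E: (@eg_col C B i0); rewrite E.
  + apply: (@R_int_final _ _ c0 _ _ _ _ _ _ _ HR1 HA HB HC Hi Hf Hker _ _ _ _ HhAs HhAd HhCs HhCd
        (eg_k B) 0 (fun i0 => inl i0) HZ1 Hortho Hsurj).
    move=> t Ht; have Hs := g_sort HB Ht.
    exists t, (fun _ => c0); split; [|split].
    * move=> i0; move: (Hs i0); case: (@eg_col C B i0) => // H; case: HnR; by exists (t i0).
    * by case.
    * by apply: functional_extensionality.
- apply: (@R_int_final _ _ c0 _ _ _ _ _ _ _ HR1 HA HB HC Hi Hf Hker _ _ _ _ HhAs HhAd HhCs HhCd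
      0 (eg_k B) (fun i0 => inr i0) HZ1 Hortho Hsurj).
  move=> t Ht; have Hs := g_sort HB Ht.
  exists (fun _ => c0), t; split; [|split].
  * by case.
  * move=> i0; move: (Hs i0); case: (@eg_col C B i0) => // H; case: HnZ; by exists (t i0).
  * by apply: functional_extensionality.
Qed.
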